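(* In the reinforcement-learning network model described in the context, there exists an $(\mathcal{F}_n)$-adapted martingale increment process $(\eta_n)_{n\in\mathbb{N}}$ (i.e. $\eta_{n+1}$ is $\mathcal{F}_{n+1}$-measurable with $\mathbb{E}(\eta_{n+1}\mid\mathcal{F}_n)=0$) such that for all $n\in\mathbb{N}$ $$x_{n+1}-x_n=\frac{F(x_n)}{T_n}+\eta_{n+1}+\widetilde R_{n+1},$$ and, for all $n,k\in\mathbb{N}$, $$|\eta_{n+1}|\le\frac{2\sum_{i,j\in\mathbb{V}}a_{ij}}{T_n},\qquad\sum_{n\ge k}|\widetilde R_{n+1}|\le\frac{2\sum_{k,l\in\mathbb{V}}a_{kl}}{T_k},$$ where $|\cdot|$ is the $L^1$ norm on $\mathbb{R}^{\mathbb{V}\times\mathbb{V}}$.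
   Context: Let $G=(\mathbb{V},E)$ be a finite graph with adjacency $\sim$. Let $a_{ij}=a_{ji}\ge0$, $>0$ only if $i\sim j$. Let $(p_W)_{W\subseteq\mathbb{V}}$ be nonnegative with $\sum_Wp_W=1$; for $i\sim j$, $p_{ij}=\sum_{W:i,j\in W}p_W$; $p_{ij}=0$ if $i\not\sim j$. Assume some $a_{ij}p_{ij}>0$. Let $v^0_{ij}=v^0_{ji}\ge0$, $>0$ iff $i\sim j$. Process: $V^0_{ij}=v^0_{ij}$, $V^n_{ij}=0$ if $i\not\sim j$, $V^n_i=\sum_jV^n_{ij}$; at each time $n$ each vertex $i$ independently chooses a neighbour $j$ with probability $V^n_{ij}/V^n_i$; independently Nature picks $W_n$ with $\mathbb{P}(W_n=W)=p_W$, i.i.d.; if $i,j\in W_n$, $i\sim j$ and $i,j$ choose each other, then $V^{n+1}_{ij}=V^{n+1}_{ji}=V^n_{ij}+a_{ij}$, else unchanged; $\mathcal{F}_n$ is the natural filtration. Let $T_n=\sum_{i,j}V^n_{ij}$ (ordered pairs), $x^n_{ij}=V^n_{ij}/T_n$, $x_n=(x^n_{ij})$. For an array $x$ let $x_i=\sum_jx_{ij}$, $H(x)=\sum_{(i,j):x_{ij}>0}a_{ij}p_{ij}x_{ij}^2/(x_ix_j)$ and $F(x)_{ij}=x_{ij}\big(a_{ij}p_{ij}\frac{x_{ij}}{x_ix_j}-H(x)\big)$ ($F_{ij}=0$ if $x_{ij}=0$; $a_{ij}p_{ij}x_{ij}/(x_ix_j):=0$ if $a_{ij}p_{ij}=0$).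 Let $\Delta^{n+1}_{ij}=V^{n+1}_{ij}-V^n_{ij}$, $\Delta^{n+1}_T=T_{n+1}-T_n$ and $\widetilde R^{ij}_{n+1}=(\Delta^{n+1}_{ij}-x^n_{ij}\Delta^{n+1}_T)\big(\frac1{T_{n+1}}-\frac1{T_n}\big)$, $\widetilde R_{n+1}=(\widetilde R^{ij}_{n+1})_{i,j}$. *)

(* Defs.v *)
(* Canonical (path-space) model of the reinforcement
   process: the randomness at time n is the outcome
   w_n = (c_n, W_n) where c_n : V -> V records the neighbour chosen by
   each vertex and W_n is the set chosen by Nature.  A history is the
   sequence [w_0; ...; w_{n-1}] (oldest first); F_n-measurable random
   variables are functions of histories of length n. *)
From HB Require Import structures.
From mathcomp Require Import all_boot all_order all_algebra.
Set Implicit Arguments. Unset Strict Implicit. Unset Printing Implicit Defensive.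
Import Order.TTheory GRing.Theory Num.Theory.
Local Open Scope ring_scope.

Section Model.
Variables (R : realFieldType) (V : finType).

Definition arr := V -> V -> R.

Definition rowsum (x : arr) (i : V) : R := \sum_(j : V) x i j.

Definition Tsum (x : arr) : R := \sum_(i : V) \sum_(j : V) x i j.

Definition norm1 (x : arr) : R := \sum_(i : V) \sum_(j : V) `|x i j|.

Variables (adj : rel V) (a : V -> V -> R) (p : {set V} -> R).

Definition pij (i j : V) : R :=
  if adj i j then \sum_(W : {set V} | (i \in W) && (j \in W)) p W else 0.

Definition Hf (x : arr) : R :=
  \sum_(i : V) \sum_(j : V)
     (if 0 < x i j then a i j * pij i j * x i j ^+ 2 / (rowsum x i * rowsum x j)
      else 0).

Definition Ff (x : arr) : arr := fun i j =>
  if x i j == 0 then 0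
  else x i j * (a i j * pij i j * x i j / (rowsum x i * rowsum x j) - Hf x).

Definition Omega := ({ffun V -> V} * {set V})%type.

(* probability that vertex i chooses j given weights Vs
   (an isolated vertex, for which V_i = 0, "chooses" itself; this choice
   has no effect on the dynamics) *)
Definition qch (Vs : arr) (i j : V) : R :=
  if 0 < rowsum Vs i then Vs i j / rowsum Vs i else (j == i)%:R.

Definition trans (Vs : arr) (w : Omega) : R :=
  (\prod_(i : V) qch Vs i (w.1 i)) * p w.2.

Definition step (Vs : arr) (w : Omega) : arr := fun i j =>
  if [&& adj i j, i \in w.2, j \in w.2, w.1 i == j & w.1 j == i]
  then Vs i j + a i j else Vs i j.

Definition state (v0 : arr) (h : seq Omega) : arr := foldl step v0 h.

Fixpoint hprob (Vs : arr) (h : seq Omega) : R :=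
  match h with
  | [::] => 1
  | w :: h' => trans Vs w * hprob (step Vs w) h'
  end.

Definition xnorm (Vs : arr) : arr := fun i j => Vs i j / Tsum Vs.

Definition Rt (Vs Vs' : arr) : arr := fun i j =>
  ((Vs' i j - Vs i j) - xnorm Vs i j * (Tsum Vs' - Tsum Vs))
  * (1 / Tsum Vs' - 1 / Tsum Vs).

End Model.

(* Main.v *)
Require Import Defs.
From HB Require Import structures.
From mathcomp Require Import all_boot all_order all_algebra.
From mathcomp Require Import ring lra.
Import Order.TTheory GRing.Theory Num.Theory.
Local Open Scope ring_scope.

Section Aux.
Variables (R : realFieldType) (V : finType) (adj : rel V)
  (a : V -> V -> R) (p : {set V} -> R).

Lemma sum_Omega (f : {ffun V -> V} -> R) (g : {set V} -> R) :
  \sum_(w : Omega V) f w.1 * g w.2 = (\sum_c f c) * (\sum_W g W).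
Proof.
rewrite -(pair_bigA _ (fun c W => f c * g W)) /= big_distrl /=.
by apply: eq_bigr => c _; rewrite big_distrr.
Qed.

Lemma prod_sum (q : V -> V -> R) :
  \sum_(c : {ffun V -> V}) \prod_k q k (c k) = \prod_k \sum_l q k l.
Proof. by rewrite bigA_distr_bigA. Qed.

Lemma qsum (s : arr R V) k : \sum_l qch s k l = 1.
Proof.
rewrite /qch; case hp: (0 < rowsum s k).
  by rewrite -big_distrl /=; apply: mulfV; rewrite gt_eqF.
by rewrite (bigD1 k) //= eqxx big1 ?addr0 // => l /negPf ->.
Qed.

Lemma trans_sum (s : arr R V) : \sum_W p W = 1 -> \sum_w trans p s w = 1.
Proof.
move=> hp; rewrite /trans (sum_Omega (fun c => \prod_i qch s i (c i)) p) prod_sum hp mulr1.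
by rewrite big1 // => k _; rewrite qsum.
Qed.

Lemma sum_ind2 (q : V -> V -> R) i j : i != j ->
  (forall k, \sum_l q k l = 1) ->
  \sum_(c : {ffun V -> V}) (\prod_k q k (c k)) * ((c i == j) && (c j == i))%:R
  = q i j * q j i.
Proof.
move=> hij hq.
pose f k l : R := if k == i then (l == j)%:R else if k == j then (l == i)%:R else 1.
have E c : ((c i == j) && (c j == i))%:R = \prod_k f k (c k).
  rewrite (bigD1 i) // (bigD1 j) /=; last by rewrite eq_sym.
  rewrite big1; last by move=> k /andP[/negPf h1 /negPf h2]; rewrite /f h1 h2.
  by rewrite /f eqxx [j == i]eq_sym (negPf hij) eqxx mulr1 -natrM mulnb.
under eq_bigr => c _ do rewrite E -big_split /=.
rewrite (prod_sum (fun k l => q k l * f k l)) (bigD1 i) // (bigD1 j) /=; last by rewrite eq_sym.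
have Ho : \prod_(k | (k != i) && (k != j)) \sum_l q k l * f k l = 1.
  apply: big1 => k /andP[/negPf hk1 /negPf hk2]; rewrite /f hk1 hk2.
  by under eq_bigr do rewrite mulr1; rewrite hq.
have Hi : \sum_l q i l * f i l = q i j.
  rewrite /f eqxx (bigD1 j) //= eqxx mulr1 big1 ?addr0 //.
  by move=> l /negPf ->; rewrite mulr0.
have Hj : \sum_l q j l * f j l = q j i.
  rewrite /f eqxx eq_sym (negPf hij) (bigD1 i) //= eqxx mulr1 big1 ?addr0 //.
  by move=> l /negPf ->; rewrite mulr0.
by rewrite Hi Hj Ho mulr1.
Qed.


Lemma ED (s : arr R V) i j : irreflexive adj ->
  \sum_w trans p s w * (step adj a s w i j - s i j)
  = a i j * (qch s i j * qch s j i) * pij adj p i j.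
Proof.
move=> irr; rewrite /pij; case hadj: (adj i j); last first.
  rewrite mulr0 big1 // => w _; rewrite /step hadj /= subrr mulr0 //.
have hij : i != j by apply: contraTneq hadj => ->; rewrite irr.
pose fc (c : {ffun V -> V}) := (\prod_k qch s k (c k)) * ((c i == j) && (c j == i))%:R.
pose fW (W : {set V}) := p W * ((i \in W) && (j \in W))%:R.
transitivity (\sum_(w : Omega V) a i j * (fc w.1 * fW w.2)).
  apply: eq_bigr => -[c W] _; rewrite /trans /step /fc /fW hadj /=.
  case: (i \in W); case: (j \in W); case: (c i == j); case: (c j == i) => /=; ring.
rewrite -big_distrr /= (sum_Omega fc fW) /fc sum_ind2 //; last by move=> k; apply: qsum.
rewrite mulrA; congr (_ * _).
rewrite /fW [RHS]big_mkcond /=; apply: eq_bigr => W _.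
by case: ifP => _; rewrite ?mulr1 ?mulr0.
Qed.


Definition Yf (x D : arr R V) : arr R V := fun i j => D i j - x i j * Tsum D.

Lemma norm_le_a (u v c : R) : 0 <= u <= c -> 0 <= v <= c -> `|u - v| <= c.
Proof. move=> /andP[? ?] /andP[? ?]; rewrite ler_norml; apply/andP; split; lra. Qed.

Lemma Tsum_ge0 (D : arr R V) : (forall i j, 0 <= D i j) -> 0 <= Tsum D.
Proof. by move=> h; apply: sumr_ge0 => i _; apply: sumr_ge0. Qed.

Lemma Tsum_le (D E : arr R V) : (forall i j, D i j <= E i j) -> Tsum D <= Tsum E.
Proof. by move=> h; apply: ler_sum => i _; apply: ler_sum. Qed.

Lemma normY2 (x D D' : arr R V) :
  (forall i j, 0 <= x i j) -> Tsum x = 1 ->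
  (forall i j, 0 <= D i j <= a i j) -> (forall i j, 0 <= D' i j <= a i j) ->
  norm1 (fun i j => Yf x D i j - Yf x D' i j) <= 2 * Tsum a.
Proof.
move=> x0 x1 hD hD'.
have hT (E : arr R V) : (forall i j, 0 <= E i j <= a i j) -> 0 <= Tsum E <= Tsum a.
  move=> hE; apply/andP; split; first by apply: Tsum_ge0 => i j; case/andP: (hE i j).
  by apply: Tsum_le => i j; case/andP: (hE i j).
have H1 : norm1 (fun i j => Yf x D i j - Yf x D' i j)
   <= \sum_i \sum_j (a i j + x i j * a i j * 0 + x i j * Tsum a).
  apply: ler_sum => i _; apply: ler_sum => j _; rewrite /Yf mulr0 addr0.
  have -> : D i j - x i j * Tsum D - (D' i j - x i j * Tsum D')
          = (D i j - D' i j) - x i j * (Tsum D - Tsum D') by ring.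
  apply: le_trans (ler_normB _ _) _; apply: lerD; first exact: norm_le_a.
  by rewrite normrM ger0_norm // ler_wpM2l //; apply: norm_le_a; apply: hT.
apply: le_trans H1 _; rewrite le_eqVlt; apply/orP; left; apply/eqP.
have -> : \sum_i \sum_j (a i j + x i j * a i j * 0 + x i j * Tsum a)
   = Tsum a + Tsum x * Tsum a.
  rewrite /Tsum big_distrl /= -big_split /=; apply: eq_bigr => i _.
  by rewrite big_distrl /= -big_split /=; apply: eq_bigr => j _; rewrite mulr0 addr0.
by rewrite x1 mul1r mulr2n mulrDl mul1r.
Qed.

Lemma normY1 (x D : arr R V) :
  (forall i j, 0 <= x i j) -> Tsum x = 1 -> (forall i j, 0 <= D i j) ->
  norm1 (Yf x D) <= 2 * Tsum D.
Proof.
move=> x0 x1 hD.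
have H1 : norm1 (Yf x D) <= \sum_i \sum_j (D i j + x i j * Tsum D).
  apply: ler_sum => i _; apply: ler_sum => j _; rewrite /Yf.
  apply: le_trans (ler_normB _ _) _; apply: lerD; first by rewrite ger0_norm.
  by rewrite normrM !ger0_norm // Tsum_ge0.
apply: le_trans H1 _; rewrite le_eqVlt; apply/orP; left; apply/eqP.
have -> : \sum_i \sum_j (D i j + x i j * Tsum D) = Tsum D + Tsum x * Tsum D.
  rewrite /Tsum big_distrl /= -big_split /=; apply: eq_bigr => i _.
  by rewrite big_distrl /= -big_split.
by rewrite x1 mul1r mulr2n mulrDl mul1r.
Qed.


Definition DD (s s' : arr R V) : arr R V := fun i j => s' i j - s i j.

Definition EY (s : arr R V) i j :=
  \sum_w trans p s w * Yf (xnorm s) (DD s (step adj a s w)) i j.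

Lemma TsumDD s s' : Tsum (DD s s') = Tsum s' - Tsum s.
Proof. by rewrite /Tsum -sumrB; apply: eq_bigr => i _; rewrite -sumrB. Qed.

Lemma step_bounds s w i j : (forall i j, 0 <= a i j) ->
  0 <= step adj a s w i j - s i j <= a i j.
Proof.
move=> ha; rewrite /step; case: ifP => _.
  by rewrite addrAC subrr add0r lexx andbT.
by rewrite subrr lexx ha.
Qed.

Lemma term_le (D : arr R V) i j : (forall i j, 0 <= D i j) -> D i j <= Tsum D.
Proof.
move=> h; apply: (@le_trans _ _ (rowsum D i)).
  by rewrite /rowsum (bigD1 j) //= lerDl sumr_ge0.
by rewrite /Tsum (bigD1 i) //= lerDl sumr_ge0 // => k _; apply: sumr_ge0.
Qed.

Lemma rowsum_ge (D : arr R V) i j : (forall i j, 0 <= D i j) -> D i j <= rowsum D i.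
Proof. by move=> h; rewrite /rowsum (bigD1 j) //= lerDl sumr_ge0. Qed.

Lemma trans_ge0 s w : (forall i j, 0 <= s i j) -> (forall W, 0 <= p W) ->
  0 <= trans p s w.
Proof.
move=> hs hp; rewrite /trans mulr_ge0 // prodr_ge0 // => k _.
rewrite /qch; case: ifP => h; first by rewrite divr_ge0 // ltW.
by rewrite ler0n.
Qed.

Lemma xnorm_ge0 (s : arr R V) : (forall i j, 0 <= s i j) -> 0 < Tsum s ->
  forall i j, 0 <= xnorm s i j.
Proof. by move=> hs hT i j; rewrite /xnorm divr_ge0 // ltW. Qed.

Lemma xnorm_sum (s : arr R V) : 0 < Tsum s -> Tsum (xnorm s) = 1.
Proof.
move=> hT; rewrite /Tsum /xnorm.
transitivity ((\sum_i \sum_j s i j) / Tsum s); last by rewrite divff // gt_eqF.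
by rewrite big_distrl; apply: eq_bigr => i _; rewrite big_distrl.
Qed.

Lemma rowsum_x (s : arr R V) k : rowsum (xnorm s) k = rowsum s k / Tsum s.
Proof. by rewrite /rowsum /xnorm big_distrl. Qed.


Lemma EY_F (v0 s : arr R V) i j :
  irreflexive adj -> (forall k l, 0 < v0 k l <-> adj k l) -> (forall k l, 0 <= v0 k l) ->
  (forall k l, v0 k l <= s k l) -> (forall k l, s k l = s l k) -> 0 < Tsum s ->
  EY s i j = Ff adj a p (xnorm s) i j.
Proof.
move=> irr hv v00 hvs hsym hT.
have s0 k l : 0 <= s k l by apply: le_trans (v00 k l) (hvs k l).
pose e k l := a k l * (qch s k l * qch s l k) * pij adj p k l.
pose e' k l := a k l * pij adj p k l * xnorm s k l ^+ 2
   / (rowsum (xnorm s) k * rowsum (xnorm s) l).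
have hE : EY s i j = e i j - xnorm s i j * Tsum e.
  rewrite /EY /Yf /DD.
  under eq_bigr do rewrite mulrBr.
  rewrite sumrB; congr (_ - _); first by rewrite ED.
  under eq_bigr do rewrite mulrCA.
  rewrite -big_distrr /=; congr (_ * _).
  rewrite /Tsum.
  under eq_bigr do rewrite big_distrr /=.
  rewrite exchange_big /=; apply: eq_bigr => k _.
  under eq_bigr do rewrite big_distrr /=.
  rewrite exchange_big /=; apply: eq_bigr => l _.
  by rewrite ED.
have he k l : e k l = e' k l.
  rewrite /e /e'; case hadj: (adj k l); last by rewrite /pij hadj !mulr0 !mul0r.
  have pkl : 0 < s k l.
    by apply: (lt_le_trans _ (hvs k l)); apply/hv.
  have rk : 0 < rowsum s k.
    by apply: (lt_le_trans pkl); apply: rowsum_ge.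
  have rl : 0 < rowsum s l.
    by rewrite (hsym k l) in pkl; apply: (lt_le_trans pkl); apply: rowsum_ge.
  rewrite /qch rk rl !rowsum_x /xnorm (hsym l k).
  by field; rewrite ?gt_eqF.
have hH : Hf adj a p (xnorm s) = Tsum e.
  rewrite /Hf /Tsum; apply: eq_bigr => k _; apply: eq_bigr => l _; rewrite he /e'.
  case: ifP => // hx.
  have := @xnorm_ge0 s s0 hT k l; rewrite le_eqVlt hx orbF => /eqP <-.
  by rewrite expr2 !mul0r mulr0 mul0r.
rewrite hE /Ff hH he /e'.
by case: ifP => [/eqP -> | _]; ring.
Qed.


Lemma Tsum_step (s : arr R V) w : (forall i j, 0 <= a i j) ->
  Tsum s <= Tsum (step adj a s w).
Proof.
move=> ha; apply: Tsum_le => i j; have := step_bounds s w i j ha.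
by case/andP; rewrite subr_ge0.
Qed.

Lemma decomp (v0 s : arr R V) w i j :
  irreflexive adj -> (forall k l, 0 < v0 k l <-> adj k l) -> (forall k l, 0 <= v0 k l) ->
  (forall k l, v0 k l <= s k l) -> (forall k l, s k l = s l k) -> 0 < Tsum s ->
  (forall i j, 0 <= a i j) ->
  xnorm (step adj a s w) i j - xnorm s i j
  = Ff adj a p (xnorm s) i j / Tsum s
    + (Yf (xnorm s) (DD s (step adj a s w)) i j - EY s i j) / Tsum s
    + Rt s (step adj a s w) i j.
Proof.
move=> irr hv v00 hvs hsym hT ha.
rewrite -(EY_F v0 s i j irr hv v00 hvs hsym hT).
have hT' : 0 < Tsum (step adj a s w) by apply: lt_le_trans hT (Tsum_step _ _ ha).
rewrite /Rt /Yf /xnorm TsumDD /DD.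
by field; rewrite ?gt_eqF.
Qed.

Lemma eta_bound (s : arr R V) w :
  (forall i j, 0 <= s i j) -> 0 < Tsum s -> (forall W, 0 <= p W) ->
  \sum_W p W = 1 -> (forall i j, 0 <= a i j) ->
  norm1 (fun i j => (Yf (xnorm s) (DD s (step adj a s w)) i j - EY s i j) / Tsum s)
  <= 2 * Tsum a / Tsum s.
Proof.
move=> s0 hT hp hp1 ha.
set Y := fun w' => Yf (xnorm s) (DD s (step adj a s w')).
set Z := fun i j => Y w i j - EY s i j.
have hZ i j : Z i j = \sum_w' trans p s w' * (Y w i j - Y w' i j).
  rewrite [RHS](eq_bigr _ (fun w' _ => mulrBr _ _ _)) sumrB -big_distrl /=.
  by rewrite trans_sum // mul1r.
have hn : norm1 Z <= 2 * Tsum a.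
  apply: (@le_trans _ _ (\sum_w' trans p s w' * (2 * Tsum a))); last first.
    by rewrite -big_distrl /= trans_sum // mul1r.
  apply: (@le_trans _ _ (\sum_w' trans p s w' * norm1 (fun i j => Y w i j - Y w' i j))); last first.
    apply: ler_sum => w' _; apply: ler_wpM2l; first exact: trans_ge0.
    apply: normY2; first exact: xnorm_ge0.
    - exact: xnorm_sum.
    - by move=> i j; apply: step_bounds.
    - by move=> i j; apply: step_bounds.
  have -> : \sum_w' trans p s w' * norm1 (fun i j => Y w i j - Y w' i j)
    = \sum_i \sum_j \sum_w' trans p s w' * `|Y w i j - Y w' i j|.
    rewrite /norm1; under eq_bigr do rewrite big_distrr /=.
    rewrite exchange_big /=; apply: eq_bigr => i _.
    under eq_bigr do rewrite big_distrr /=.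
    by rewrite exchange_big.
  apply: ler_sum => i _; apply: ler_sum => j _; rewrite hZ.
  apply: le_trans (ler_norm_sum _ _ _) _; apply: ler_sum => w' _.
  by rewrite normrM ger0_norm // trans_ge0.
have -> : norm1 (fun i j => Z i j / Tsum s) = norm1 Z / Tsum s.
  rewrite /norm1 big_distrl; apply: eq_bigr => i _; rewrite big_distrl.
  apply: eq_bigr => j _; rewrite normrM (@ger0_norm _ (Tsum s)^-1) //.
  by rewrite invr_ge0 ltW.
by rewrite ler_pM2r // invr_gt0.
Qed.

Lemma Rt_bound (s : arr R V) w :
  (forall i j, 0 <= s i j) -> 0 < Tsum s -> (forall i j, 0 <= a i j) ->
  norm1 (Rt s (step adj a s w))
  <= 2 * Tsum a * (1 / Tsum s - 1 / Tsum (step adj a s w)).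
Proof.
move=> s0 hT ha.
set s' := step adj a s w.
have hT' : 0 < Tsum s' by apply: lt_le_trans hT (Tsum_step _ _ ha).
have hle : 1 / Tsum s' <= 1 / Tsum s.
  by rewrite !div1r lef_pV2 ?posrE // Tsum_step.
have -> : norm1 (Rt s s')
    = norm1 (Yf (xnorm s) (DD s s')) * (1 / Tsum s - 1 / Tsum s').
  rewrite /norm1 big_distrl; apply: eq_bigr => i _; rewrite big_distrl.
  apply: eq_bigr => j _; rewrite /Rt /Yf TsumDD normrM.
  by rewrite (ler0_norm (x := 1 / Tsum s' - 1 / Tsum s)) ?opprB // subr_le0.
apply: ler_wpM2r; first by rewrite subr_ge0.
apply: le_trans (normY1 (xnorm s) (DD s s') _ _ _) _.
- exact: xnorm_ge0.
- exact: xnorm_sum.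
- by move=> i j; have /andP[] := step_bounds s w i j ha.
rewrite ler_pM2l //; apply: Tsum_le => i j.
by have /andP[] := step_bounds s w i j ha.
Qed.

End Aux.
Lemma inv_state (R : realFieldType) (V : finType) (adj : rel V) (a : V -> V -> R)
  (v0 : arr R V) (h : seq (Omega V)) (s : arr R V) :
  symmetric adj -> (forall i j, a i j = a j i) -> (forall i j, 0 <= a i j) ->
  (forall i j, v0 i j <= s i j) -> (forall i j, s i j = s j i) ->
  (forall i j, v0 i j <= foldl (step adj a) s h i j) /\
  (forall i j, foldl (step adj a) s h i j = foldl (step adj a) s h j i).
Proof.
move=> hsym asym a0; elim: h s => [|w h IH] s hv hs //=.
apply: IH.
  move=> i j; apply: le_trans (hv i j) _.
  by have /andP[] := @step_bounds _ _ adj a s w i j a0; rewrite subr_ge0.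
move=> i j; rewrite /step (hsym i j) (asym i j) (hs i j).
case: w => c W /=.
by case: (adj j i); case: (i \in W); case: (j \in W); case: (c i == j); case: (c j == i).
Qed.

Lemma take_rcons_size (T : Type) (h : seq T) w : take (size (rcons h w)).-1 (rcons h w) = h.
Proof. by rewrite size_rcons /= -cats1 take_size_cat. Qed.

Lemma state_rcons (R : realFieldType) (V : finType) (adj : rel V) (a : V -> V -> R) v0 h w :
  state adj a v0 (rcons h w) = step adj a (state adj a v0 h) w.
Proof. by rewrite /state foldl_rcons. Qed.

Theorem lemma1 (R : realFieldType) (V : finType) (adj : rel V)
  (a : V -> V -> R) (p : {set V} -> R) (v0 : V -> V -> R) :
  symmetric adj -> irreflexive adj ->
  (forall i j, a i j = a j i) -> (forall i j, 0 <= a i j) ->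
  (forall i j, 0 < a i j -> adj i j) ->
  (forall W, 0 <= p W) -> \sum_(W : {set V}) p W = 1 ->
  (exists i j, 0 < a i j * pij adj p i j) ->
  (forall i j, v0 i j = v0 j i) -> (forall i j, 0 <= v0 i j) ->
  (forall i j, 0 < v0 i j <-> adj i j) ->
  exists eta : seq (Omega V) -> V -> V -> R,
    (* martingale increment: E(eta_{n+1} | F_n) = 0 *)
    (forall h : seq (Omega V), 0 < hprob adj a p v0 h ->
       forall i j,
         \sum_(w : Omega V) trans p (state adj a v0 h) w * eta (rcons h w) i j = 0)
    /\
    (* decomposition and bound on eta_{n+1}, a.s. *)
    (forall (h : seq (Omega V)) (w : Omega V),
       0 < hprob adj a p v0 (rcons h w) ->
       let s := state adj a v0 h in
       let s' := step adj a s w in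
       (forall i j,
          xnorm s' i j - xnorm s i j
          = Ff adj a p (xnorm s) i j / Tsum s + eta (rcons h w) i j + Rt s s' i j)
       /\ norm1 (eta (rcons h w)) <= 2 * (\sum_(i : V) \sum_(j : V) a i j) / Tsum s)
    /\
    (* sum_{n >= k} |R~_{n+1}| <= 2 sum a / T_k, a.s. (partial sums) *)
    (forall (h : seq (Omega V)) (k : nat),
       0 < hprob adj a p v0 h -> (k <= size h)%N ->
       \sum_(k <= n < size h)
          norm1 (Rt (state adj a v0 (take n h)) (state adj a v0 (take n.+1 h)))
       <= 2 * (\sum_(i : V) \sum_(j : V) a i j) / Tsum (state adj a v0 (take k h))).
Proof.
move=> hsym irr asym a0 aadj p0 p1 [i0 [j0 hpos]] vsym v00 hv.
have hinv h : (forall i j, v0 i j <= state adj a v0 h i j) /\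
              (forall i j, state adj a v0 h i j = state adj a v0 h j i).
  by apply: inv_state => // i j; rewrite lexx.
have Tv0 : 0 < Tsum v0.
  have apos : 0 < a i0 j0.
    rewrite lt_def a0 andbT; apply/eqP => h0; move: hpos; by rewrite h0 mul0r ltxx.
  apply: lt_le_trans (term_le _ _ _ i0 j0 v00); apply/hv; exact: aadj.
have hT h : 0 < Tsum (state adj a v0 h).
  by apply: lt_le_trans Tv0 (Tsum_le _ _ _ _ (hinv h).1).
have hs0 h i j : 0 <= state adj a v0 h i j.
  exact: le_trans (v00 i j) ((hinv h).1 i j).
exists (fun h i j =>
  (Yf _ _ (xnorm (state adj a v0 (take (size h).-1 h)))
      (DD _ _ (state adj a v0 (take (size h).-1 h)) (state adj a v0 h)) i j
   - EY _ _ adj a p (state adj a v0 (take (size h).-1 h)) i j)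
  / Tsum (state adj a v0 (take (size h).-1 h))).
split; [|split].
- move=> h _ i j.
  under eq_bigr do rewrite take_rcons_size state_rcons mulrA mulrBr.
  rewrite -big_distrl /= sumrB -big_distrl /= trans_sum // mul1r.
  by rewrite subrr mul0r.
- move=> h w _ /=; rewrite !take_rcons_size !state_rcons; split.
    move=> i j; apply: decomp => //; [exact: (hinv h).1 | exact: (hinv h).2].
  by apply: eta_bound.
- move=> h k _ hk.
  pose w0 : Omega V := ([ffun v => v], set0).
  pose u n := 1 / Tsum (state adj a v0 (take n h)).
  have step_n n : (n < size h)%N ->
      state adj a v0 (take n.+1 h) = step adj a (state adj a v0 (take n h)) (nth w0 h n).
    by move=> hn; rewrite (take_nth w0 hn) state_rcons.
  apply: (@le_trans _ _ (\sum_(k <= n < size h) 2 * Tsum a * (u n - u n.+1))).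
    apply: ler_sum_nat => n /andP[_ hn]; rewrite step_n // /u -step_n //.
    by rewrite step_n //; apply: Rt_bound.
  rewrite -big_distrr /=.
  have -> : \sum_(k <= n < size h) (u n - u n.+1) = u k - u (size h).
    rewrite -[RHS]opprB -(telescope_sumr _ hk) -sumrN.
    by apply: eq_bigr => n _; rewrite opprB.
  apply: ler_wpM2l.
    by rewrite mulr_ge0 // Tsum_ge0.
  have : 0 <= u (size h) by rewrite /u divr_ge0 // ltW.
  rewrite /u div1r; lra.
Qed.
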